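(* Let $M\in\mathrm{SL}(n,\mathbb{Z})$ and suppose that for some integer $k\ge1$ the characteristic polynomial of $M^k$ is reducible over $\mathbb{Z}$. Then either the Galois group of the characteristic polynomial of $M$ (acting on its $n$ roots) is imprimitive, or the characteristic polynomial of $M$ is cyclotomic (all its roots are roots of unity).
   Context: A permutation group acting on a set $\Omega$ of size $n$ is called imprimitive if it preserves some partition of $\Omega$ other than the partition into singletons and the partition with the single block $\Omega$ (in particular, an intransitive group is imprimitive in this sense). *)

(* Defs.v *)
From HB Require Import structures.
From mathcomp Require Import all_boot all_order all_algebra all_fingroup all_field.
Set Implicit Arguments. Unset Strict Implicit. Unset Printing Implicit Defensive.
Import GRing.Theory Num.Theory.
Local Open Scope ring_scope.

(* A polynomial over Z is reducible over Z if it is a product of two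
   non-constant integer polynomials (for monic polynomials such as
   characteristic polynomials, this is reducibility over Z). *)
Definition reducible_over_Z (p : {poly int}) : Prop :=
  exists q r : {poly int}, p = q * r /\ (1 < size q)%N /\ (1 < size r)%N.

Definition polyC_of_int (p : {poly int}) : {poly algC} := map_poly intr p.

Definition root_labeling n (p : {poly int}) (r : 'I_n -> algC) : Prop :=
  polyC_of_int p = \prod_(i < n) ('X - (r i)%:P).

(* The Galois group of p acting on its n roots (labelled by r): the
   permutations of the labels induced by field automorphisms of algC
   (algC is an algebraic closure of Q, so these restrict to exactly the
   Galois group of the splitting field of p over Q). *)
Definition galois_perm n (r : 'I_n -> algC) (s : 'S_n) : Prop :=
  exists f : {rmorphism algC -> algC}, forall i, r (s i) = f (r i).

Definition imprimitive n (G : 'S_n -> Prop) : Prop :=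
  exists P : {set {set 'I_n}},
    [/\ partition P [set: 'I_n],
        P != [set [set i] | i : 'I_n],
        P != [set [set: 'I_n]] &
        forall s, G s -> forall B, B \in P -> s @: B \in P].

Definition cyclotomic_poly (p : {poly int}) : Prop :=
  forall z : algC, root (polyC_of_int p) z -> exists2 m, (0 < m)%N & z ^+ m = 1.

(* Main.v *)
Require Import Defs.
From HB Require Import structures.
From mathcomp Require Import all_boot all_order all_algebra all_fingroup all_field zify.
Import GRing.Theory Num.Theory.
Local Open Scope ring_scope.
Set Implicit Arguments. Unset Strict Implicit. Unset Printing Implicit Defensive.

Lemma int_mul1 (x y : int) : x * y = 1 -> x = y.
Proof.
move=> H; have := congr1 absz H; rewrite abszM => /eqP; rewrite muln_eq1 => /andP[/eqP ax /eqP ay].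
move: H; have [->|->] : x = 1 \/ x = -1 by lia.
- by rewrite mul1r.
- by rewrite mulN1r => /eqP; rewrite eqr_oppLR => /eqP.
Qed.

Lemma part_inv n (T : eqType) (h : 'I_n -> T) (s : 'S_n) :
  (forall x y, (h (s x) == h (s y)) = (h x == h y)) ->
  forall B, B \in preim_partition h [set: 'I_n] -> s @: B \in preim_partition h [set: 'I_n].
Proof.
move=> Hs B /imsetP [x _ ->]; apply/imsetP; exists (s x); first by rewrite inE.
apply/setP => y; rewrite [in RHS]inE /=; apply/idP/idP.
- by case/imsetP=> z; rewrite !inE /= => hz ->; rewrite Hs.
- move=> hy; apply/imsetP; exists ((s^-1)%g y); last by rewrite permKV.
  by rewrite !inE -Hs permKV; rewrite !inE in hy.
Qed.

Lemma part_nsing n (T : eqType) (h : 'I_n -> T) i j :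
  i != j -> h i = h j -> preim_partition h [set: 'I_n] != [set [set x] | x : 'I_n].
Proof.
move=> ij hij; apply/negP => /eqP E.
have : [set y in [set: 'I_n] | h i == h y] \in preim_partition h [set: 'I_n].
  by apply/imsetP; exists i; rewrite ?inE.
rewrite E => /imsetP [x _ Ex].
have Hi : i \in [set x] by rewrite -Ex !inE eqxx.
have Hj : j \in [set x] by rewrite -Ex !inE hij eqxx.
rewrite !inE in Hi Hj.
by rewrite (eqP Hi) (eqP Hj) eqxx in ij.
Qed.

Lemma part_nfull n (T : eqType) (h : 'I_n -> T) i j :
  h i != h j -> preim_partition h [set: 'I_n] != [set [set: 'I_n]].
Proof.
move=> hij; apply/negP => /eqP E.
have : [set y in [set: 'I_n] | h i == h y] \in preim_partition h [set: 'I_n].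
  by apply/imsetP; exists i; rewrite ?inE.
rewrite E inE => /eqP /setP /(_ j); rewrite !inE => hj.
by rewrite andTb in hj; rewrite hj in hij.
Qed.

Lemma eig_pow n (A : 'M[algC]_n) (a : algC) k :
  root (char_poly A) a -> root (char_poly (A ^+ k)) (a ^+ k).
Proof.
rewrite -!eigenvalue_root_char => /eigenvalueP [v Hv nz]; apply/eigenvalueP.
exists v => //; elim: k => [|k IH]; first by rewrite !expr0 scale1r mulmx1.
by rewrite !exprSr -mulmxE mulmxA IH -scalemxAl Hv scalerA.
Qed.

Lemma map_mxX n (M : 'M[int]_n) k :
  map_mx (intr : int -> algC) (M ^+ k) = (map_mx intr M) ^+ k.
Proof.
elim: k => [|k IH]; first by rewrite !expr0 map_mx1.
by rewrite !exprS -!mulmxE map_mxM IH.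
Qed.

Lemma detX n (M : 'M[int]_n) k : \det (M ^+ k) = \det M ^+ k.
Proof.
elim: k => [|k IH]; first by rewrite !expr0 det1.
by rewrite !exprS -mulmxE det_mulmx IH.
Qed.

Lemma deg1_root (q : {poly int}) (z : algC) :
  size q = 2%N -> q`_1 * q`_1 = 1 -> root (map_poly intr q) z ->
  z = (- (q`_0 * q`_1))%:~R.
Proof.
move=> sq q11; rewrite /root horner_coef size_map_inj_poly ?sq //; last exact: intr_inj.
rewrite big_ord_recl big_ord1 /= !coef_map /= expr0 mulr1 expr1 => /eqP H.
have e : (q`_1)%:~R * (q`_1)%:~R = 1 :> algC by rewrite -intrM q11.
rewrite addrC in H.
have h1 : (q`_1)%:~R * z = - (q`_0)%:~R :> algC by apply/eqP; rewrite -subr_eq0 opprK H.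
transitivity ((q`_1)%:~R * ((q`_1)%:~R * z) : algC); first by rewrite mulrA e mul1r.
by rewrite h1 mulrN -intrM mulrC mulrNz.
Qed.

Lemma imprim_of n (T : eqType) (h : 'I_n -> T) (G : 'S_n -> Prop) i j a b :
  (forall s, G s -> forall x y, (h (s x) == h (s y)) = (h x == h y)) ->
  i != j -> h i = h j -> h a != h b -> imprimitive G.
Proof.
move=> HG ij hij hab; exists (preim_partition h [set: 'I_n]); split.
- exact: preim_partitionP.
- exact: part_nsing ij hij.
- exact: part_nfull hab.
- by move=> s Gs; apply: part_inv (HG s Gs).
Qed.

Theorem lemma8p3 (n : nat) (M : 'M[int]_n) (k : nat) (r : 'I_n -> algC) :
  \det M = 1 ->
  (1 <= k)%N ->
  reducible_over_Z (char_poly (M ^+ k)) ->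
  root_labeling (char_poly M) r ->
  imprimitive (galois_perm r) \/ cyclotomic_poly (char_poly M).
Proof.
move=> dM k1 [q [rr [Hqr [sq sr]]]] Hlab.
pose mu i := r i ^+ k.
have Hrootr : forall i, root (map_poly intr (char_poly M)) (r i).
  move=> i; move: Hlab; rewrite /root_labeling /polyC_of_int => ->.
  rewrite /root horner_prod; apply/prodf_eq0; exists i => //.
  by rewrite hornerXsubC subrr.
have Hroot : forall i, root (map_poly intr (char_poly (M ^+ k))) (mu i).
  move=> i; rewrite map_char_poly map_mxX; apply: eig_pow.
  by rewrite -map_char_poly.
have prodr1 : \prod_i r i = 1.
  have := congr1 (fun p => p.[0]) Hlab.
  rewrite /polyC_of_int /= horner_coef0 coef_map /= char_poly_det dM mulr1.
  rewrite horner_prod (eq_bigr (fun i => - r i)) => [|i _]; last by rewrite hornerXsubC sub0r.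
  rewrite prodrN cardE size_enum_ord rmorphXn rmorphN rmorph1.
  move=> H; apply: (@mulfI _ ((-1) ^+ n)); first by apply: expf_neq0; rewrite oppr_eq0 oner_eq0.
  by rewrite mulr1 [RHS]H.
have rootsr : forall z, root (map_poly intr (char_poly M)) z -> exists i, z = r i.
  move=> z; move: Hlab; rewrite /root_labeling /polyC_of_int => ->.
  rewrite /root horner_prod => /prodf_eq0 [i _]; rewrite hornerXsubC subr_eq0 => /eqP ->.
  by exists i.
case: (boolP [forall i, forall j, mu i == mu j]) => [Hall | Hnall].
  right => z /rootsr [i ->]; exists (k * n)%N.
    by rewrite muln_gt0 k1 /=; apply: leq_ltn_trans (ltn_ord i).
  have -> : r i ^+ (k * n) = \prod_(j < n) mu j.
    rewrite exprM (eq_bigr (fun _ => mu i)) => [|j _]; last first.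
      by move/forallP: Hall => /(_ i) /forallP /(_ j) /eqP.
    by rewrite prodr_const cardE size_enum_ord.
  by rewrite /mu prodrXl prodr1 expr1n.
left.
move: Hnall => /forallPn [i0 /forallPn [j0 Hij0]].
case: (boolP [forall i, forall j, (mu i == mu j) ==> (i == j)]) => [Hinj | Hninj]; last first.
  move: Hninj => /forallPn [i1 /forallPn [j1]]; rewrite negb_imply => /andP [/eqP e ne].
  apply: (imprim_of (h := mu) _ ne e Hij0).
  by move=> s [f Hf] x y; rewrite /mu !Hf -!rmorphXn (inj_eq (fmorph_inj f)).
have {}Hinj : forall i j, mu i = mu j -> i = j.
  by move=> i j e; move/forallP: Hinj => /(_ i) /forallP /(_ j); rewrite e eqxx => /eqP.
pose pk := map_poly (intr : int -> algC) (char_poly (M ^+ k)).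
pose qc := map_poly (intr : int -> algC) q.
pose rc := map_poly (intr : int -> algC) rr.
have Epk : pk = qc * rc by rewrite /pk Hqr rmorphM.
pose rs := [seq mu i | i <- enum 'I_n].
have urs : uniq rs by rewrite map_inj_uniq ?enum_uniq //; exact: Hinj.
have sizeq : size qc = size q by rewrite size_map_inj_poly //; exact: intr_inj.
have sizer : size rc = size rr by rewrite size_map_inj_poly //; exact: intr_inj.
have qc0 : qc != 0 by rewrite -size_poly_eq0 sizeq -lt0n (ltn_trans _ sq).
have rc0 : rc != 0 by rewrite -size_poly_eq0 sizer -lt0n (ltn_trans _ sr).
have sp : size pk = n.+1 by rewrite size_map_inj_poly ?size_char_poly //; exact: intr_inj.
have spsum : n.+1 = (size q + size rr).-1 by rewrite -sp Epk size_mul // sizeq sizer.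
have Hpk : pk = \prod_(z <- rs) ('X - z%:P).
  have [c Hc] : exists c, pk = c * \prod_(z <- rs) ('X - z%:P).
    apply: uniq_roots_prod_XsubC; last by rewrite uniq_rootsE.
    by apply/allP => z /mapP [i _ ->]; apply: Hroot.
  have spr : size (\prod_(z <- rs) ('X - z%:P)) = n.+1.
    by rewrite size_prod_XsubC size_map size_enum_ord.
  have c0 : c != 0 by apply/eqP => c0; move: sp; rewrite Hc c0 mul0r size_poly0.
  have : size c == 1%N.
    move: sp; rewrite Hc size_mul // ?monic_neq0 ?monic_prod_XsubC // spr.
    by rewrite addnS /= -[n.+1]add1n => /addIn ->.
  case/size_poly1P => c1 c1nz Ec.
  have lp : lead_coef (c * \prod_(z <- rs) ('X - z%:P)) = 1.
    rewrite -Hc /pk lead_coef_map_inj //; last exact: intr_inj.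
    by rewrite (monicP (char_poly_monic _)).
  move: lp; rewrite Ec lead_coefM lead_coefC (monicP (monic_prod_XsubC _ _ _)) mulr1 => c11.
  by rewrite Hc Ec c11 mul1r.
have [z0 Hz0] : exists z, root qc z by apply/closed_rootP; rewrite sizeq neq_ltn sq orbT.
have rootpk : forall z, root pk z -> exists i, z = mu i.
  by move=> z; rewrite Hpk root_prod_XsubC => /mapP [i _ ->]; exists i.
have [j2 Ej] : exists j, z0 = mu j by apply: rootpk; rewrite Epk rootM Hz0.
pose g i := root qc (mu i).
have gj2 : g j2 by rewrite /g -Ej.
have [j1 gj1] : exists j, ~~ g j.
  case: (boolP [forall j, g j]) => [Hallg | /forallPn [j Hj]]; last by exists j.
  exfalso; have : (size rs < size qc)%N.
    apply: max_poly_roots => //.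
    by apply/allP => z /mapP [i _ ->]; exact: (forallP Hallg i).
  rewrite size_map size_enum_ord sizeq; move: spsum sr; clear; lia.
have Hg : forall s, galois_perm r s -> forall x, g (s x) = g x.
  move=> s [f Hf] x.
  have fq : map_poly f qc = qc.
    by rewrite /qc -map_poly_comp; apply: eq_map_poly => a /=; exact: rmorph_int.
  by rewrite /g /mu Hf -rmorphXn /root -{1}fq horner_map fmorph_eq0.
have gne : g j2 != g j1 by rewrite gj2; move: gj1; case: (g j1).
case: (ltnP 2 n) => [n3 | n2].
  have o0 : (0 < n)%N by apply: ltn_trans n3.
  have o1 : (1 < n)%N by apply: ltn_trans n3.
  pose a0 := Ordinal o0; pose a1 := Ordinal o1; pose a2 := Ordinal n3.
  have : [|| g a0 == g a1, g a0 == g a2 | g a1 == g a2].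
    by case: (g a0); case: (g a1); case: (g a2).
  have HG : forall s, galois_perm r s -> forall x y, (g (s x) == g (s y)) = (g x == g y).
    by move=> s Gs x y; rewrite !Hg.
  case/or3P => /eqP e.
  - by apply: (imprim_of HG _ e gne).
  - by apply: (imprim_of HG _ e gne).
  - by apply: (imprim_of HG _ e gne).
exfalso.
have sq2 : size q = 2%N by move: spsum sq sr n2; clear; lia.
have sr2 : size rr = 2%N by move: spsum sq sr n2; clear; lia.
have nodd : odd n = false by have -> : n = 2%N by move: spsum sq sr n2; clear; lia.
have l1 : q`_1 * rr`_1 = 1.
  have := lead_coefM q rr; rewrite -Hqr (monicP (char_poly_monic _)).
  by rewrite !lead_coefE sq2 sr2.
have q11 : q`_1 * q`_1 = 1 by rewrite {2}(int_mul1 l1).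
have r11 : rr`_1 * rr`_1 = 1 by rewrite -{1}(int_mul1 l1).
have c00 : q`_0 * rr`_0 = 1.
  rewrite -coef0M -Hqr char_poly_det detX dM expr1n mulr1.
  by rewrite -signr_odd nodd.
have e2 := deg1_root sq2 q11 gj2.
have e1 : mu j1 = (- (rr`_0 * rr`_1))%:~R.
  apply: deg1_root sr2 r11 _.
  have := Hroot j1; rewrite -/pk Epk rootM => /orP [h|//]; by rewrite /g h in gj1.
have : (- (q`_0 * q`_1)) = (- (rr`_0 * rr`_1)).
  by apply: int_mul1; rewrite mulrNN mulrACA c00 mulrC l1 mulr1.
move=> ez; have := Hinj _ _ (etrans e2 (etrans (congr1 _ ez) (esym e1))).
by move=> ej; rewrite ej eqxx in gne.
Qed.
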